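(* Let $X$ be a compact, zero-dimensional metric space with a continuous free action of a countable amenable group $G$, and let $(F_n)$ be a Følner sequence of $G$ as in the context. For every $n$ there exists a clopen set $V\subset X$ such that (1) the sets $g(V)$, $g\in F_n$, are pairwise disjoint, and (2) there exists $N\ge n$ with $\bigcup_{g\in F_N}g(V)=X$.
   Context: The Følner sequence $(F_n)$ consists of finite sets with $|F_n\triangle gF_n|/|F_n|\to0$ for all $g$, and is assumed to satisfy $e\in F_n$, $F_n\subset F_{n+1}$ for all $n$, and every $g\in G$ belongs to $F_n$ for all sufficiently large $n$. The action is free if $gx=x$ implies $g=e$. *)

(* Defs.v *)
From Stdlib Require Import Reals List Arith.
Open Scope R_scope.


Record group := Group {
  gcar :> Type;
  gmul : gcar -> gcar -> gcar;
  ginv : gcar -> gcar;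
  gone : gcar;
  gmulA : forall a b c, gmul a (gmul b c) = gmul (gmul a b) c;
  gmul1 : forall a, gmul gone a = a;
  gmulV : forall a, gmul (ginv a) a = gone
}.

Definition countable_group (G : group) : Prop :=
  exists f : G -> nat, forall a b, f a = f b -> a = b.

(** Finite subsets of G are represented by duplicate-free lists. *)
Definition gtranslate (G : group) (g : G) (F : list G) : list G :=
  map (gmul G g) F.

Definition symdiff_card (G : group)
  (eqd : forall a b : G, {a = b} + {a <> b}) (g : G) (F : list G) : nat :=
  length (filter (fun x => if in_dec eqd x (gtranslate G g F) then false else true) F)
  + length (filter (fun y => if in_dec eqd y F then false else true) (gtranslate G g F)).

Definition folner (G : group) (eqd : forall a b : G, {a = b} + {a <> b})
  (F : nat -> list G) : Prop :=
  (forall n, NoDup (F n)) /\ (forall n, F n <> nil) /\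
  (forall g : G, Un_cv (fun n => INR (symdiff_card G eqd g (F n)) / INR (length (F n))) 0).

Definition amenable (G : group) (eqd : forall a b : G, {a = b} + {a <> b}) : Prop :=
  exists F, folner G eqd F.

(** Følner sequence with the standing assumptions of the paper:
    e in F_n, F_n subset F_{n+1}, every g eventually in F_n. *)
Definition nice_folner (G : group) (eqd : forall a b : G, {a = b} + {a <> b})
  (F : nat -> list G) : Prop :=
  folner G eqd F /\
  (forall n, In (gone G) (F n)) /\
  (forall n g, In g (F n) -> In g (F (S n))) /\
  (forall g : G, exists N, forall n, (N <= n)%nat -> In g (F n)).

Record metric_space := MetricSpace {
  mcar :> Type;
  dist : mcar -> mcar -> R;
  dist_nonneg : forall x y, 0 <= dist x y;
  dist_sym : forall x y, dist x y = dist y x;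
  dist_eq0 : forall x y, dist x y = 0 <-> x = y;
  dist_tri : forall x y z, dist x z <= dist x y + dist y z
}.

Definition is_open (X : metric_space) (U : X -> Prop) : Prop :=
  forall x, U x -> exists eps, 0 < eps /\ forall y, dist X x y < eps -> U y.

Definition is_closed (X : metric_space) (U : X -> Prop) : Prop :=
  is_open X (fun x => ~ U x).

Definition clopen (X : metric_space) (U : X -> Prop) : Prop :=
  is_open X U /\ is_closed X U.

Definition compact_space (X : metric_space) : Prop :=
  forall (I : Type) (U : I -> X -> Prop),
    (forall i, is_open X (U i)) -> (forall x, exists i, U i x) ->
    exists l : list I, forall x, exists i, In i l /\ U i x.

Definition zero_dimensional (X : metric_space) : Prop :=
  forall (U : X -> Prop) x, is_open X U -> U x ->
    exists V, clopen X V /\ V x /\ forall y, V y -> U y.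

Definition ms_continuous (X : metric_space) (f : X -> X) : Prop :=
  forall x eps, 0 < eps -> exists delta, 0 < delta /\
    forall y, dist X x y < delta -> dist X (f x) (f y) < eps.

(** Continuous action of G on X (G discrete). *)
Definition continuous_action (G : group) (X : metric_space) (act : G -> X -> X) : Prop :=
  (forall x, act (gone G) x = x) /\
  (forall g h x, act (gmul G g h) x = act g (act h x)) /\
  (forall g, ms_continuous X (act g)).

Definition free_action (G : group) (X : metric_space) (act : G -> X -> X) : Prop :=
  forall g x, act g x = x -> g = gone G.

Definition img (G : group) (X : metric_space) (act : G -> X -> X) (g : G)
  (V : X -> Prop) : X -> Prop :=
  fun x => exists v, V v /\ act g v = x.

(* Main.v *)
Require Import Defs.
From Stdlib Require Import Reals List Arith Lra Lia Classical.
Open Scope R_scope.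

Lemma open_ext (X : metric_space) (A B : X -> Prop) :
  (forall y, A y <-> B y) -> is_open X A -> is_open X B.
Proof.
  intros H HA x Bx. destruct (HA x) as [e [He1 He2]]. apply H; exact Bx.
  exists e; split; auto. intros y Hy; apply H; auto.
Qed.

Lemma clopen_ext (X : metric_space) (A B : X -> Prop) :
  (forall y, A y <-> B y) -> clopen X A -> clopen X B.
Proof.
  intros H [H1 H2]; split.
  - eapply open_ext; eauto.
  - eapply open_ext; [|exact H2]. intros y; simpl. rewrite (H y). tauto.
Qed.

Lemma open_or (X : metric_space) (A B : X -> Prop) :
  is_open X A -> is_open X B -> is_open X (fun y => A y \/ B y).
Proof.
  intros HA HB x [Ax|Bx].
  - destruct (HA x Ax) as [e [He1 He2]]. exists e; split; auto.
  - destruct (HB x Bx) as [e [He1 He2]]. exists e; split; auto.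
Qed.

Lemma open_and (X : metric_space) (A B : X -> Prop) :
  is_open X A -> is_open X B -> is_open X (fun y => A y /\ B y).
Proof.
  intros HA HB x [Ax Bx].
  destruct (HA x Ax) as [e1 [He1 He1']]. destruct (HB x Bx) as [e2 [He2 He2']].
  exists (Rmin e1 e2); split. apply Rmin_glb_lt; auto.
  intros y Hy; split.
  - apply He1'. eapply Rlt_le_trans; [exact Hy| apply Rmin_l].
  - apply He2'. eapply Rlt_le_trans; [exact Hy| apply Rmin_r].
Qed.

Lemma clopen_not (X : metric_space) (A : X -> Prop) :
  clopen X A -> clopen X (fun y => ~ A y).
Proof.
  intros [H1 H2]; split; auto.
  eapply open_ext; [|exact H1]. intros y; simpl. split; [tauto| apply NNPP].
Qed.

Lemma clopen_or (X : metric_space) (A B : X -> Prop) :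
  clopen X A -> clopen X B -> clopen X (fun y => A y \/ B y).
Proof.
  intros [A1 A2] [B1 B2]; split.
  - apply open_or; auto.
  - eapply open_ext; [| apply (open_and X _ _ A2 B2)]. intros y; simpl; tauto.
Qed.

Lemma clopen_and (X : metric_space) (A B : X -> Prop) :
  clopen X A -> clopen X B -> clopen X (fun y => A y /\ B y).
Proof.
  intros [A1 A2] [B1 B2]; split.
  - apply open_and; auto.
  - eapply open_ext; [| apply (open_or X _ _ A2 B2)]. intros y; simpl.
    split; [tauto|]. intros H. apply not_and_or in H. exact H.
Qed.

Lemma clopen_True (X : metric_space) : clopen X (fun _ => True).
Proof.
  split. intros x _; exists 1; split; [lra|auto].
  intros x H; exfalso; apply H; auto.
Qed.

Lemma clopen_False (X : metric_space) : clopen X (fun _ => False).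
Proof.
  split. intros x H; destruct H.
  intros x _; exists 1; split; [lra|auto].
Qed.

Lemma open_preimage (X : metric_space) (f : X -> X) (A : X -> Prop) :
  ms_continuous X f -> is_open X A -> is_open X (fun y => A (f y)).
Proof.
  intros Hf HA x Ax. destruct (HA _ Ax) as [e [He He']].
  destruct (Hf x e He) as [d [Hd Hd']]. exists d; split; auto.
Qed.

Lemma clopen_preimage (X : metric_space) (f : X -> X) (A : X -> Prop) :
  ms_continuous X f -> clopen X A -> clopen X (fun y => A (f y)).
Proof.
  intros Hf [H1 H2]; split.
  - apply open_preimage; auto.
  - apply (open_preimage X f (fun z => ~ A z)); auto.
Qed.

Lemma ms_cont_comp (X : metric_space) (f g : X -> X) :
  ms_continuous X f -> ms_continuous X g -> ms_continuous X (fun y => f (g y)).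
Proof.
  intros Hf Hg x e He. destruct (Hf (g x) e He) as [d2 [Hd2 Hd2']].
  destruct (Hg x d2 Hd2) as [d1 [Hd1 Hd1']]. exists d1; split; auto.
Qed.

Lemma ball_open (X : metric_space) (x : X) (r : R) : is_open X (fun y => Defs.dist X x y < r).
Proof.
  intros y Hy. exists (r - Defs.dist X x y); split; [lra|].
  intros z Hz. pose proof (Defs.dist_tri X x y z). lra.
Qed.

Lemma clopen_forall_list (X : metric_space) {A : Type} (L : list A) (P : A -> X -> Prop) :
  (forall a, In a L -> clopen X (P a)) -> clopen X (fun y => forall a, In a L -> P a y).
Proof.
  induction L as [|a L IH]; intros H.
  - eapply clopen_ext; [|apply clopen_True]. intros y; simpl; split; auto; intros _ a [].
  - eapply clopen_ext; [| apply (clopen_and X (P a) _ (H a (or_introl eq_refl)) (IH (fun b Hb => H b (or_intror Hb))))].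
    intros y; simpl; split.
    + intros [H1 H2] b [<-|Hb]; auto.
    + intros H1; split; auto.
Qed.

Lemma list_min_r {A : Type} (Q : A -> R -> Prop) (L : list A) :
  (forall a r r', Q a r -> 0 < r' -> r' <= r -> Q a r') ->
  (forall a, In a L -> exists r, 0 < r /\ Q a r) ->
  exists r, 0 < r /\ forall a, In a L -> Q a r.
Proof.
  intros Hm. induction L as [|a L IH]; intros H.
  - exists 1; split; [lra| intros a []].
  - destruct (H a (or_introl eq_refl)) as [r1 [Hr1 Hq1]].
    destruct IH as [r2 [Hr2 Hq2]]. intros b Hb; apply H; right; auto.
    exists (Rmin r1 r2); split. apply Rmin_glb_lt; auto.
    intros b [<-|Hb].
    + eapply Hm; [exact Hq1| apply Rmin_glb_lt; auto| apply Rmin_l].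
    + eapply Hm; [exact (Hq2 b Hb)| apply Rmin_glb_lt; auto| apply Rmin_r].
Qed.

Lemma eventually_list (G : group) (F : nat -> list G) :
  (forall g : G, exists N, forall n, (N <= n)%nat -> In g (F n)) ->
  forall L : list G, exists N, forall m, (N <= m)%nat -> forall a, In a L -> In a (F m).
Proof.
  intros H L; induction L as [|a L [N IH]].
  - exists 0%nat; intros m _ a [].
  - destruct (H a) as [Na HNa]. exists (Nat.max Na N). intros m Hm b [<-|Hb].
    + apply HNa. lia.
    + apply IH; auto. lia.
Qed.

Fixpoint build {X A : Type} (P : list A) (ph : A -> X -> X) (l : list (X -> Prop)) : X -> Prop :=
  match l with
  | nil => fun _ => False
  | W :: l' => fun y => build P ph l' y \/ (W y /\ forall p, In p P -> ~ build P ph l' (ph p y))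
  end.

Lemma build_clopen (X : metric_space) {A : Type} (P : list A) (ph : A -> X -> X) (l : list (X -> Prop)) :
  (forall W, In W l -> clopen X W) -> (forall p, ms_continuous X (ph p)) -> clopen X (build P ph l).
Proof.
  intros HW Hc. induction l as [|W l IH]; simpl.
  - apply clopen_False.
  - apply clopen_or. apply IH; intros; apply HW; right; auto.
    apply clopen_and. apply HW; left; auto.
    apply (clopen_forall_list X P (fun p y => ~ build P ph l (ph p y))).
    intros p _. apply (clopen_not X (fun y => build P ph l (ph p y))).
    apply (clopen_preimage X (ph p) (build P ph l)); auto.
    apply IH; intros; apply HW; right; auto.
Qed.

Lemma build_good {X A : Type} (P : list A) (ph : A -> X -> X) (l : list (X -> Prop)) :
  (forall p, In p P -> exists q, In q P /\ forall y, ph q (ph p y) = y) ->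
  (forall W, In W l -> forall p, In p P -> forall y, W y -> ~ W (ph p y)) ->
  forall p, In p P -> forall y, build P ph l y -> ~ build P ph l (ph p y).
Proof.
  intros Hs. induction l as [|W l IH]; intros HW p Hp y; simpl.
  - tauto.
  - assert (IH' := IH (fun W' HW' => HW W' (or_intror HW'))).
    intros [Vy|[Wy Ty]] [Vz|[Wz Tz]].
    + exact (IH' p Hp y Vy Vz).
    + destruct (Hs p Hp) as [q [Hq Hqe]]. apply (Tz q Hq). rewrite Hqe. exact Vy.
    + exact (Ty p Hp Vz).
    + exact (HW W (or_introl eq_refl) p Hp y Wy Wz).
Qed.

Lemma build_cover {X A : Type} (P : list A) (ph : A -> X -> X) (l : list (X -> Prop)) :
  forall W, In W l -> forall y, W y -> build P ph l y \/ exists p, In p P /\ build P ph l (ph p y).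
Proof.
  induction l as [|W0 l IH]; intros W HW y Wy; simpl.
  - destruct HW.
  - destruct HW as [<-|HW].
    + destruct (classic (build P ph l y)) as [H|H]; [left; left; auto|].
      destruct (classic (forall p, In p P -> ~ build P ph l (ph p y))) as [H2|H2].
      * left; right; auto.
      * right. apply not_all_ex_not in H2. destruct H2 as [p H2].
        exists p. split. apply NNPP; tauto.
        left. apply NNPP; tauto.
    + destruct (IH W HW y Wy) as [H|[p [Hp H]]]; [left; left; auto|right; exists p; split; auto; left; auto].
Qed.

Lemma act_inv_l (G : group) (X : metric_space) (act : G -> X -> X) :
  continuous_action G X act -> forall g y, act (ginv G g) (act g y) = y.
Proof. intros [H1 [H2 _]] g y. rewrite <- H2, gmulV, H1. reflexivity. Qed.

Lemma act_inv_r (G : group) (X : metric_space) (act : G -> X -> X) :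
  continuous_action G X act -> forall g y, act g (act (ginv G g) y) = y.
Proof.
  intros Ha g y.
  assert (E : act (ginv G g) (act g (act (ginv G g) y)) = act (ginv G g) y) by apply (act_inv_l G X act Ha).
  apply (f_equal (act (ginv G (ginv G g)))) in E.
  rewrite !(act_inv_l G X act Ha) in E. exact E.
Qed.

Lemma gmul_inv_eq (G : group) (g h : G) : gmul G (ginv G h) g = gone G -> g = h.
Proof.
  intros E.
  assert (E1 : g = gmul G (ginv G (ginv G h)) (gone G)).
  { rewrite <- E, gmulA, gmulV, gmul1. reflexivity. }
  assert (E2 : h = gmul G (ginv G (ginv G h)) (gone G)).
  { rewrite <- (gmulV G h), gmulA, gmulV, gmul1. reflexivity. }
  congruence.
Qed.

Lemma local_pair (G : group) (X : metric_space) (act : G -> X -> X)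
  (Hact : continuous_action G X act) (Hfree : free_action G X act) (g h : G) (x : X) :
  g <> h -> exists r, 0 < r /\ forall y, Defs.dist X x y < r ->
     Defs.dist X x (act (ginv G h) (act g y)) < r -> False.
Proof.
  intros Hgh.
  set (ph := fun y => act (ginv G h) (act g y)).
  assert (Hne : ph x <> x).
  { intro E. apply Hgh. apply gmul_inv_eq. apply (Hfree _ x).
    destruct Hact as [_ [H2 _]]. rewrite H2. exact E. }
  set (d := Defs.dist X x (ph x)).
  assert (Hd : 0 < d).
  { destruct (Rle_lt_or_eq_dec 0 d (dist_nonneg X _ _)) as [H|H]; auto.
    exfalso. apply Hne. symmetry. apply (proj1 (dist_eq0 X x (ph x))). unfold d in H. rewrite <- H. reflexivity. }
  assert (Hc : ms_continuous X ph).
  { destruct Hact as [_ [_ H3]]. unfold ph. apply (ms_cont_comp X (act (ginv G h)) (act g)); auto. }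
  destruct (Hc x (d/2)) as [del [Hdel Hdel']]. lra.
  exists (Rmin del (d/2)); split. apply Rmin_glb_lt; lra.
  intros y Hy Hz.
  pose proof (Rmin_l del (d/2)). pose proof (Rmin_r del (d/2)).
  assert (H1 : Defs.dist X (ph x) (ph y) < d/2) by (apply Hdel'; lra).
  pose proof (Defs.dist_tri X x (ph y) (ph x)).
  rewrite (Defs.dist_sym X (ph y) (ph x)) in H2.
  change (Defs.dist X x (ph y) < Rmin del (d / 2)) in Hz. unfold d in *. lra.
Qed.

Theorem mainTheorem4 (G : group) (eqd : forall a b : G, {a = b} + {a <> b})
  (Gcount : countable_group G) (Gamen : amenable G eqd)
  (X : metric_space) (Xcomp : compact_space X) (Xzd : zero_dimensional X)
  (act : G -> X -> X) (Hact : continuous_action G X act) (Hfree : free_action G X act)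
  (F : nat -> list G) (HF : nice_folner G eqd F) :
  forall n : nat, exists V : X -> Prop,
    clopen X V /\
    (forall g h, In g (F n) -> In h (F n) -> g <> h ->
       forall x, ~ (img G X act g V x /\ img G X act h V x)) /\
    (exists N : nat, (n <= N)%nat /\
       forall x, exists g, In g (F N) /\ img G X act g V x).
Proof.
  intros n.
  destruct HF as [_ [Hone [_ Hev]]].
  set (P := filter (fun p : G * G => if eqd (fst p) (snd p) then false else true)
              (list_prod (F n) (F n))).
  assert (HP : forall g h, In (g, h) P <-> In g (F n) /\ In h (F n) /\ g <> h).
  { intros g h. unfold P. rewrite filter_In, in_prod_iff. simpl.
    destruct (eqd g h); split; intuition congruence. }
  set (ph := fun (p : G * G) y => act (ginv G (snd p)) (act (fst p) y)).
  set (good := fun W : X -> Prop => forall p, In p P -> forall y, W y -> ~ W (ph p y)).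
  assert (Step1 : forall x, exists W, clopen X W /\ good W /\ W x).
  { intros x.
    destruct (list_min_r (fun p r => forall y, Defs.dist X x y < r ->
        Defs.dist X x (ph p y) < r -> False) P) as [r [Hr Hq]].
    - intros a r r' Ha Hr' Hle y H1 H2. apply (Ha y); lra.
    - intros [g h] Hp. apply HP in Hp. destruct Hp as [_ [_ Hgh]].
      exact (local_pair G X act Hact Hfree g h x Hgh).
    - destruct (Xzd (fun y => Defs.dist X x y < r) x (ball_open X x r)) as [W [HW [Wx Wsub]]].
      { rewrite (proj2 (dist_eq0 X x x) eq_refl). exact Hr. }
      exists W; split; [exact HW|split; [|exact Wx]].
      intros p Hp y Wy Wz. exact (Hq p Hp y (Wsub y Wy) (Wsub _ Wz)). }
  set (I := {W : X -> Prop | clopen X W /\ good W}).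
  destruct (Xcomp I (fun i => proj1_sig i)) as [l Hl].
  { intros i. exact (proj1 (proj1 (proj2_sig i))). }
  { intros x. destruct (Step1 x) as [W [H1 [H2 H3]]].
    exists (exist _ W (conj H1 H2)). exact H3. }
  set (Ws := map (fun i : I => proj1_sig i) l).
  set (V := build P ph Ws).
  assert (HWs : forall W, In W Ws -> clopen X W /\ good W).
  { intros W HW. unfold Ws in HW. apply in_map_iff in HW.
    destruct HW as [i [<- _]]. exact (proj2_sig i). }
  assert (Hsym : forall p, In p P -> exists q, In q P /\ forall y, ph q (ph p y) = y).
  { intros [g h] Hp. exists (h, g). split.
    - apply HP in Hp. apply HP. intuition.
    - intros y. unfold ph; simpl. rewrite (act_inv_r G X act Hact h).
      apply (act_inv_l G X act Hact). }
  assert (Vgood : good V).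
  { intros p Hp y. exact (build_good P ph Ws Hsym (fun W HW => proj2 (HWs W HW)) p Hp y). }
  exists V. split; [|split].
  - apply build_clopen. intros W HW; apply (HWs W HW).
    intros p. unfold ph. destruct Hact as [_ [_ H3]]. apply ms_cont_comp; auto.
  - intros g h Hg Hh Hgh x [[v1 [V1 E1]] [v2 [V2 E2]]].
    assert (Hp : In (g, h) P) by (apply HP; auto).
    apply (Vgood _ Hp v1 V1). unfold ph; simpl. rewrite E1, <- E2.
    rewrite (act_inv_l G X act Hact). exact V2.
  - destruct (eventually_list G F Hev (map (fun p => gmul G (ginv G (fst p)) (snd p)) P))
      as [N HN].
    exists (Nat.max N n). split; [lia|].
    intros x. destruct (Hl x) as [i [Hi Hix]].
    assert (HW : In (proj1_sig i) Ws) by (unfold Ws; apply in_map; auto).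
    destruct (build_cover P ph Ws (proj1_sig i) HW x Hix) as [Vx|[p [Hp Vp]]].
    + exists (gone G). split; [apply Hone|]. exists x. split; auto.
      destruct Hact as [H1 _]; apply H1.
    + exists (gmul G (ginv G (fst p)) (snd p)). split.
      * apply HN; [lia|]. apply (in_map (fun p => gmul G (ginv G (fst p)) (snd p))); auto.
      * exists (ph p x). split; auto. unfold ph.
        destruct Hact as [H1 [H2 H3]]. rewrite H2.
        rewrite (act_inv_r G X act (conj H1 (conj H2 H3))).
        apply (act_inv_l G X act (conj H1 (conj H2 H3))).
Qed.
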